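(* Let $\mathcal{A}$ be an essential and irreducible hyperplane arrangement in $V\cong\mathbb{K}^\ell$. Suppose there is a subset $S\subseteq\mathcal{A}$ with $|S|=\ell+1$ and $\langle S\rangle_{\mathcal{A}}=\mathcal{A}$. Then $\mathcal{A}$ is projectively unique, i.e. for every arrangement $\mathcal{C}$ in $V$ with $L(\mathcal{C})\cong L(\mathcal{A})$ as posets there is $\varphi\in\mathrm{GL}(V)$ with $\mathcal{C}=\{\varphi(H)\mid H\in\mathcal{A}\}$.
   Context: For an arrangement $\mathcal{A}$, $L(\mathcal{A})$ is the set of all intersections of subsets of $\mathcal{A}$, ordered by reverse inclusion. An arrangement is essential if the intersection of all its hyperplanes is $\{0\}$, and irreducible if it is not (up to linear isomorphism) a product of two nonempty arrangements. For $\varnothing\neq S\subseteq\mathcal{A}$ set $\mathrm{Gen}_0(\mathcal{A},S):=S$ and inductively $\mathrm{Gen}_{i+1}(\mathcal{A},S):=\{H\in\mathcal{A}\mid \exists\, J\subseteq L(\mathrm{Gen}_i(\mathcal{A},S)) \text{ with } H=\sum_{X\in J}X\}$ (sum of subspaces). The subarrangement generated by $S$ is $\langle S\rangle_{\mathcal{A}}:=\bigcup_{i\ge0}\mathrm{Gen}_i(\mathcal{A},S)$. *)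

(* Defs.v *)
From HB Require Import structures.
From mathcomp Require Import all_boot all_order all_algebra.
From mathcomp Require Import finmap.
Set Implicit Arguments. Unset Strict Implicit. Unset Printing Implicit Defensive.
Import GRing.Theory.
Local Open Scope ring_scope.
Local Open Scope fset_scope.

Section Arr.
Variables (K : fieldType) (l : nat).
Notation V := 'rV[K]_l.
Notation sub := {vspace V}.

Definition is_hyperplane (H : sub) : Prop := (\dim H).+1 = l.

Definition arrangement (A : {fset sub}) : Prop :=
  forall H, H \in A -> is_hyperplane H.

(* intersection lattice of a (finite) family of subspaces given by predicate P:
   all intersections of finite subfamilies (the empty intersection being V) *)
Definition Lset (P : sub -> Prop) (X : sub) : Prop :=
  exists B : {fset sub}, (forall H, H \in B -> P H) /\ X = (\bigcap_(H <- B) H)%VS.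

Definition Lat (A : {fset sub}) : sub -> Prop := Lset (fun H => H \in A).

Definition essential (A : {fset sub}) : Prop := (\bigcap_(H <- A) H)%VS = 0%VS.

(* A is reducible iff, up to a linear change of coordinates, A = A1 x A2 with
   A1, A2 nonempty arrangements; i.e. V = V1 (+) V2 internally and A is the
   union of nonempty A1, A2 with every H in A1 containing V2 and every H in A2
   containing V1. *)
Definition irreducible (A : {fset sub}) : Prop :=
  ~ exists (V1 V2 : sub) (A1 A2 : {fset sub}),
      [/\ directv (V1 + V2)%VS /\ (V1 + V2)%VS = fullv,
          A = A1 `|` A2, A1 != fset0, A2 != fset0 &
          (forall H, H \in A1 -> (V2 <= H)%VS) /\ (forall H, H \in A2 -> (V1 <= H)%VS)].

Fixpoint Gen (A S : {fset sub}) (i : nat) : sub -> Prop :=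
  match i with
  | 0 => fun H => H \in S
  | i'.+1 => fun H => H \in A /\
      exists J : {fset sub}, (forall X, X \in J -> Lset (Gen A S i') X) /\
                             H = (\sum_(X <- J) X)%VS
  end.

Definition generated (A S : {fset sub}) (H : sub) : Prop := exists i, Gen A S i H.

Definition Lat_iso (C A : {fset sub}) : Prop :=
  exists g : sub -> sub,
    [/\ forall X, Lat A X -> Lat C (g X),
        forall Y, Lat C Y -> exists2 X, Lat A X & g X = Y &
        forall X Y, Lat A X -> Lat A Y -> ((X <= Y)%VS <-> (g X <= g Y)%VS)].

Definition proj_unique (A : {fset sub}) : Prop :=
  forall C : {fset sub}, arrangement C -> Lat_iso C A ->
    exists phi : 'End(V), lker phi = 0%VS /\
      C = [fset (phi @: H)%VS | H in A].

End Arr.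

(* Main.v *)
Require Import Defs.
From HB Require Import structures.
From mathcomp Require Import all_boot all_order all_algebra.
From mathcomp Require Import finmap zify.
From Stdlib Require Import Classical.

Module M1.
Set Implicit Arguments. Unset Strict Implicit. Unset Printing Implicit Defensive.
Import GRing.Theory.
Local Open Scope ring_scope.

Section Gen.
Variables (K : fieldType) (l : nat).
Local Notation V := 'rV[K]_l.
Local Notation sub := {vspace V}.

Lemma dimV : \dim (fullv : sub) = l.
Proof. by rewrite dimvf /dim /= mul1n. Qed.

Lemma memv_bigcapP (I : eqType) (r : seq I) (P : pred I) (F : I -> sub) x :
  reflect (forall i, i \in r -> P i -> x \in F i) (x \in (\bigcap_(i <- r | P i) F i)%VS).
Proof.
elim: r => [|a r IH]; first by rewrite big_nil memvf; constructor.
rewrite big_cons; case Pa: (P a).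
  rewrite memv_cap; apply: (iffP andP) => [[xa /IH xr] i|H]; last first.
    split; first by apply: H; rewrite ?mem_head.
    by apply/IH => i ir; apply: H; rewrite in_cons ir orbT.
  by rewrite in_cons => /orP[/eqP->|/xr]//.
apply: (iffP IH) => [H i|H i ir]; last by apply: H; rewrite in_cons ir orbT.
by rewrite in_cons => /orP[/eqP-> |/H]//; rewrite Pa.
Qed.

Lemma subv_full_eq (U : sub) : (l <= \dim U)%N -> U = fullv.
Proof. move=> h; by apply/eqP; rewrite eqEdim subvf dimV h. Qed.

Lemma sub_hyp_eq (U W : sub) : (U <= W)%VS -> (\dim W <= \dim U)%N -> U = W.
Proof. by move=> s d; apply/eqP; rewrite eqEdim s d. Qed.

Lemma dimv_le (U : sub) : (\dim U <= l)%N.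
Proof. by have := dimvS (subvf U); rewrite dimV. Qed.

End Gen.

End M1.
Import M1.
Module M2.
Set Implicit Arguments. Unset Strict Implicit. Unset Printing Implicit Defensive.
Import GRing.Theory.
Local Open Scope ring_scope.
Local Open Scope fset_scope.

Section Lat.
Variables (K : fieldType) (l : nat).
Local Notation V := 'rV[K]_l.
Local Notation sub := {vspace V}.

Lemma memv_bigcapF (B : {fset sub}) x :
  reflect (forall H, H \in B -> x \in H) (x \in (\bigcap_(H <- B) H)%VS).
Proof. apply: (iffP (memv_bigcapP _ _ _ _)) => h H hB; [exact: h | move=> _; exact: h]. Qed.

Lemma Lset_full (P : sub -> Prop) : Lset P fullv.
Proof.
exists fset0; split; first by move=> H; rewrite in_fset0.
by apply/vspaceP => x; rewrite memvf; apply/esym/memv_bigcapF => H; rewrite in_fset0.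
Qed.

Lemma Lset_base (P : sub -> Prop) H : P H -> Lset P H.
Proof.
move=> PH; exists [fset H]; split; first by move=> H'; rewrite in_fset1 => /eqP->.
apply/vspaceP => x; apply/idP/memv_bigcapF => [xH H'|h]; first by rewrite in_fset1 => /eqP->.
by apply: h; rewrite in_fset1.
Qed.

Lemma Lset_cap (P : sub -> Prop) X Y : Lset P X -> Lset P Y -> Lset P (X :&: Y)%VS.
Proof.
move=> [BX [PX ->]] [BY [PY ->]]; exists (BX `|` BY); split.
  by move=> H; rewrite in_fsetU => /orP[/PX|/PY].
apply/vspaceP => x; rewrite memv_cap; apply/andP/memv_bigcapF => [[/memv_bigcapF h1 /memv_bigcapF h2] H|h].
  by rewrite in_fsetU => /orP[/h1|/h2].
by split; apply/memv_bigcapF => H hH; apply: h; rewrite in_fsetU hH ?orbT.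
Qed.

Lemma Lset_bigcap (P : sub -> Prop) (I : Type) (r : seq I) (Q : pred I) (F : I -> sub) :
  (forall i, Q i -> Lset P (F i)) -> Lset P (\bigcap_(i <- r | Q i) F i)%VS.
Proof.
move=> h; elim: r => [|a r IH]; first by rewrite big_nil; apply: Lset_full.
by rewrite big_cons; case Qa: (Q a) => //; apply: Lset_cap => //; apply: h.
Qed.

Lemma Lset_cases (P : sub -> Prop) Y : Lset P Y -> Y = fullv \/ exists2 H, P H & (Y <= H)%VS.
Proof.
move=> [B [PB ->]]; have [->|[H HB]] := fset_0Vmem B.
  left; apply/vspaceP => x; rewrite memvf; apply/memv_bigcapF => H; by rewrite in_fset0.
right; exists H; first exact: PB.
by apply/subvP => x /memv_bigcapF; apply.
Qed.

End Lat.

End M2.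
Import M2.
Module M3.
Set Implicit Arguments. Unset Strict Implicit. Unset Printing Implicit Defensive.
Import GRing.Theory.
Local Open Scope ring_scope.
Local Open Scope fset_scope.

Section Iso.
Variables (K : fieldType) (l : nat).
Local Notation V := 'rV[K]_l.
Local Notation sub := {vspace V}.
Variables (A C : {fset sub}) (g : sub -> sub).
Hypotheses (arrA : arrangement A) (arrC : arrangement C)
  (gL : forall X, Lat A X -> Lat C (g X))
  (gS : forall Y, Lat C Y -> exists2 X, Lat A X & g X = Y)
  (gI : forall X Y, Lat A X -> Lat A Y -> ((X <= Y)%VS <-> (g X <= g Y)%VS)).

Lemma LatA_full : Lat A fullv. Proof. exact: Lset_full. Qed.
Lemma LatA_cap X Y : Lat A X -> Lat A Y -> Lat A (X :&: Y)%VS. Proof. exact: Lset_cap. Qed.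

Lemma LatA_base H : H \in A -> Lat A H. Proof. by move=> h; apply: Lset_base. Qed.
Lemma LatC_base H : H \in C -> Lat C H. Proof. by move=> h; apply: Lset_base. Qed.
Lemma LatC_full : Lat C fullv. Proof. exact: Lset_full. Qed.

Lemma g_full : g fullv = fullv.
Proof.
have [X0 LX0 e] := gS LatC_full.
have h : (g X0 <= g fullv)%VS by apply/(gI LX0 LatA_full); exact: subvf.
by rewrite e in h; apply/eqP; rewrite eqEdim subvf /=; apply: dimvS.
Qed.

Lemma g_inj X Y : Lat A X -> Lat A Y -> g X = g Y -> X = Y.
Proof.
move=> LX LY e; apply/eqP; rewrite eqEsubv; apply/andP; split.
  by apply/(gI LX LY); rewrite e.
by apply/(gI LY LX); rewrite e.
Qed.

Lemma g_cap X Y : Lat A X -> Lat A Y -> g (X :&: Y)%VS = (g X :&: g Y)%VS.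
Proof.
move=> LX LY; have LXY := LatA_cap LX LY.
have [Z LZ e] := gS (Lset_cap (gL LX) (gL LY)).
apply/eqP; rewrite eqEsubv; apply/andP; split.
  by rewrite subv_cap; apply/andP; split; apply/(gI LXY) => //; rewrite ?capvSl ?capvSr.
rewrite -e; apply/(gI LZ LXY); rewrite subv_cap; apply/andP; split.
  by apply/(gI LZ LX); rewrite e capvSl.
by apply/(gI LZ LY); rewrite e capvSr.
Qed.

Lemma g_bigcap (I : Type) (r : seq I) (Q : pred I) (F : I -> sub) :
  (forall i, Q i -> Lat A (F i)) ->
  g (\bigcap_(i <- r | Q i) F i)%VS = (\bigcap_(i <- r | Q i) g (F i))%VS.
Proof.
move=> h; elim: r => [|a r IH]; first by rewrite !big_nil g_full.
rewrite !big_cons; case Qa: (Q a) => //.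
by rewrite g_cap ?IH //; [exact: h | exact: Lset_bigcap].
Qed.

Lemma hyp_ne_full (H : sub) : is_hyperplane H -> H != fullv.
Proof.
rewrite /is_hyperplane => d; apply/negP => /eqP e.
by move: d; rewrite e dimV => h; have := ltnSn l; rewrite {2}h ltnn.
Qed.

Lemma hyp_sub_eq (H Y : sub) : is_hyperplane H -> (H <= Y)%VS -> Y != fullv -> H = Y.
Proof.
rewrite /is_hyperplane => d s nf; apply: sub_hyp_eq => //.
have := dimv_le Y; rewrite -[X in (_ <= X)%N]d leq_eqVlt => /orP[/eqP e|//].
by move: nf; rewrite (subv_full_eq (_ : l <= \dim Y)%N) ?eqxx // e d.
Qed.

Lemma gA_C H : H \in A -> g H \in C.
Proof.
move=> HA; have LH : Lat A H by apply: Lset_base.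
have [e|[H'' H''C s]] := Lset_cases (gL LH).
  by move: (hyp_ne_full (arrA HA)); rewrite -(g_inj LH LatA_full) ?g_full ?eqxx.
have [Y LY eY] := gS (LatC_base H''C).
have HY : (H <= Y)%VS by apply/(gI LH LY); rewrite eY.
have nf : Y != fullv.
  by apply/eqP => eYf; move: (hyp_ne_full (arrC H''C)); rewrite -eY eYf g_full eqxx.
by rewrite (hyp_sub_eq (arrA HA) HY nf) eY.
Qed.

Lemma C_gA H' : H' \in C -> exists2 H, H \in A & g H = H'.
Proof.
move=> H'C; have [X LX eX] := gS (LatC_base H'C).
have [eXf|[H HA s]] := Lset_cases LX.
  by move: (hyp_ne_full (arrC H'C)); rewrite -eX eXf g_full eqxx.
exists H => //; have LH : Lat A H by apply: Lset_base.
have s' : (H' <= g H)%VS by rewrite -eX; apply/(gI LX LH).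
apply/esym/(hyp_sub_eq (arrC H'C) s').
by apply/eqP => e; move: (hyp_ne_full (arrA HA)); rewrite -(g_inj LH LatA_full) ?g_full ?e ?eqxx.
Qed.

End Iso.

End M3.
Import M3.
Module M4.
Set Implicit Arguments. Unset Strict Implicit. Unset Printing Implicit Defensive.
Import GRing.Theory.
Local Open Scope ring_scope.

Section Basis.
Variables (K : fieldType) (l : nat).
Local Notation V := 'rV[K]_l.
Local Notation sub := {vspace V}.
Variables (F : 'I_l -> sub) (v : 'I_l -> V).
Hypotheses (vin : forall i j, j != i -> v i \in F j) (vout : forall i, v i \notin F i).

Definition Bm : 'M[K]_l := \matrix_i v i.

Lemma Bm_sum (x : 'rV[K]_l) : x *m Bm = \sum_i x 0 i *: v i.
Proof. by rewrite mulmx_sum_row; apply: eq_bigr => i _; rewrite rowK. Qed.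

Lemma scale_mem (U : sub) (c : K) (w : V) : c != 0 -> (c *: w \in U) = (w \in U).
Proof.
move=> c0; apply/idP/idP => h; last exact: memvZ.
by rewrite -[w]scale1r -(mulVf c0) -scalerA memvZ.
Qed.

Lemma Bm_coef0 (x : 'rV[K]_l) k : x *m Bm \in F k -> x 0 k = 0.
Proof.
rewrite Bm_sum (bigD1 k) //= => h.
have hr : \sum_(i | i != k) x 0 i *: v i \in F k.
  by apply: memv_suml => i ik; apply: memvZ; apply: vin; rewrite eq_sym.
rewrite rpredDr // in h.
apply/eqP; apply/negPn/negP => nz; move/negP: (vout k); apply; by rewrite -(scale_mem _ _ nz).
Qed.

Lemma Bm_unit : Bm \in unitmx.
Proof.
rewrite -row_free_unit; apply: inj_row_free => x x0.
apply/rowP => k; rewrite mxE; apply: Bm_coef0; by rewrite x0 mem0v.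
Qed.

Lemma Bm_decomp (y : V) : y = (y *m invmx Bm) *m Bm.
Proof. by rewrite mulmxKV // Bm_unit. Qed.

Lemma Bm_cap0 (y : V) : (forall k, y \in F k) -> y = 0.
Proof.
move=> h; have h0 : y *m invmx Bm = 0.
  by apply/rowP => k; rewrite [RHS]mxE; apply: Bm_coef0; rewrite -Bm_decomp.
by rewrite [y]Bm_decomp h0 mul0mx.
Qed.

End Basis.

End M4.
Import M4.
Module M5.
Set Implicit Arguments. Unset Strict Implicit. Unset Printing Implicit Defensive.
Import GRing.Theory.
Local Open Scope ring_scope.

Section Core.
Variables (K : fieldType) (l : nat).
Local Notation V := 'rV[K]_l.
Local Notation sub := {vspace V}.

Lemma hyp_compl (H : sub) (y x : V) : is_hyperplane H -> y \notin H ->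
  exists c : K, x - c *: y \in H.
Proof.
move=> hH yH.
have full : (H + <[y]>)%VS = fullv.
  apply/eqP/negPn/negP => nf.
  have e := hyp_sub_eq hH (addvSl H <[y]>) nf.
  by move/negP: yH; apply; rewrite e; apply: (subvP (addvSr H <[y]>)); apply: memv_line.
have : x \in (H + <[y]>)%VS by rewrite full memvf.
move/memv_addP => [h hin [w /vlineP [c ->] ->]]; exists c.
by rewrite addrK.
Qed.

Variables (Hs Hs' : 'I_l -> sub) (H0 H0' : sub) (v v' : 'I_l -> V).
Hypotheses (hHs : forall i, is_hyperplane (Hs i)) (hHs' : forall i, is_hyperplane (Hs' i))
  (hH0 : is_hyperplane H0) (hH0' : is_hyperplane H0')
  (vin : forall i j, j != i -> v i \in Hs j) (vout : forall i, v i \notin Hs i)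
  (v'in : forall i j, j != i -> v' i \in Hs' j) (v'out : forall i, v' i \notin Hs' i)
  (vH0 : forall i, (v i \in H0) = (v' i \in H0')).

Lemma exists_out : exists k, v k \notin H0.
Proof.
apply: NNPP => hn.
have all : forall k, v k \in H0.
  by move=> k; apply/negPn/negP => hk; apply: hn; exists k.
move/negP: (hyp_ne_full hH0); apply; apply/eqP/vspaceP => y; rewrite memvf.
rewrite (Bm_decomp vin vout y) Bm_sum; apply: memv_suml => i _; exact: memvZ.
Qed.

Lemma core : exists phi : 'End(V), lker phi = 0%VS /\
  (forall i, (phi @: Hs i)%VS = Hs' i) /\ (phi @: H0)%VS = H0'.
Proof.
have [k vk] := exists_out.
have v'k : v' k \notin H0' by rewrite -vH0.
have cex i : exists c : K, v i - c *: v k \in H0 := hyp_compl (v i) hH0 vk.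
have c'ex i : exists c : K, v' i - c *: v' k \in H0' := hyp_compl (v' i) hH0' v'k.
pose c i := xchoose (cex i); pose c' i := xchoose (c'ex i).
have cP i : v i - c i *: v k \in H0 := xchooseP (cex i).
have c'P i : v' i - c' i *: v' k \in H0' := xchooseP (c'ex i).
have c0 i : (c i == 0) = (v i \in H0).
  apply/idP/idP => [/eqP e|h]; first by move: (cP i); rewrite e scale0r subr0.
  move: (cP i); rewrite rpredBl // => h2; apply/negPn/negP => nz.
  by move/negP: vk; apply; rewrite -(scale_mem _ _ nz).
have c'0 i : (c' i == 0) = (v' i \in H0').
  apply/idP/idP => [/eqP e|h]; first by move: (c'P i); rewrite e scale0r subr0.
  move: (c'P i); rewrite rpredBl // => h2; apply/negPn/negP => nz.
  by move/negP: v'k; apply; rewrite -(scale_mem _ _ nz).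
have cc i : (c i == 0) = (c' i == 0) by rewrite c0 c'0 vH0.
pose w i := if c' i == 0 then v' i else (c i / c' i) *: v' i.
have wsc i : exists2 a : K, a != 0 & w i = a *: v' i.
  rewrite /w; case: ifP => h; first by exists 1; rewrite ?oner_eq0 ?scale1r.
  by exists (c i / c' i) => //; rewrite mulf_eq0 invr_eq0 cc h.
have win i j : j != i -> w i \in Hs' j.
  by move=> ji; have [a a0 ->] := wsc i; apply: memvZ; apply: v'in.
have wout i : w i \notin Hs' i.
  by have [a a0 ->] := wsc i; rewrite scale_mem.
have wH0 i : w i - c i *: v' k \in H0'.
  rewrite /w; case: ifP => h.
    by move: (h); rewrite -cc => /eqP ->; rewrite scale0r subr0 -c'0.
  have -> : (c i / c' i) *: v' i - c i *: v' k = (c i / c' i) *: (v' i - c' i *: v' k).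
    by rewrite scalerBr scalerA mulfVK ?h.
  exact: memvZ.
pose Bv := Bm v; pose Bw := Bm w.
have Bvu : Bv \in unitmx := Bm_unit vin vout.
have Bwu : Bw \in unitmx := Bm_unit win wout.
pose M := invmx Bv *m Bw.
pose phi : 'End(V) := linfun (mulmxr M).
have phiE x : phi (x *m Bv) = x *m Bw.
  by rewrite lfunE /= /M mulmxA mulmxK.
have phiE' y : phi y = (y *m invmx Bv) *m Bw.
  by rewrite {1}(Bm_decomp vin vout y) phiE.
have ker : lker phi = 0%VS.
  apply/eqP; rewrite -subv0; apply/subvP => y; rewrite memv_ker phiE' memv0 => /eqP h.
  have h1 : y *m invmx Bv = 0.
    have rf : row_free Bw by rewrite row_free_unit.
    by apply: (row_free_inj rf); rewrite /= h mul0mx.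
  by rewrite (Bm_decomp vin vout y) h1 mul0mx.
have dimphi U : \dim (phi @: U) = \dim U by apply: limg_dim_eq; rewrite ker capv0.
exists phi; split => //; split.
  move=> i; apply: (hyp_sub_eq); first by rewrite /is_hyperplane dimphi; exact: hHs.
    apply/subvP => z /memv_imgP [y yin ->]; rewrite phiE'.
    have x0 : (y *m invmx Bv) 0 i = 0 by apply: (Bm_coef0 vin vout); rewrite -(Bm_decomp vin vout).
    rewrite (Bm_sum w); apply: memv_suml => j _.
    have [->|ji] := eqVneq j i; first by rewrite x0 scale0r mem0v.
    by apply: memvZ; apply: win; rewrite eq_sym.
  exact: hyp_ne_full.
apply: (hyp_sub_eq); first by rewrite /is_hyperplane dimphi; exact: hH0.
  apply/subvP => z /memv_imgP [y yin ->]; rewrite phiE'.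
  set x := y *m invmx Bv.
  have split_sum (u : 'I_l -> V) (a : 'I_l -> K) (b : V) :
      \sum_j x 0 j *: u j = \sum_j x 0 j *: (u j - a j *: b) + (\sum_j x 0 j * a j) *: b.
    rewrite scaler_suml -big_split /=; apply: eq_bigr => j _; by rewrite scalerBr scalerA subrK.
  have d0 : \sum_j x 0 j * c j = 0.
    have yeq : y = x *m Bv by rewrite /x -(Bm_decomp vin vout).
    move: yin; rewrite yeq Bm_sum (split_sum v c (v k)) rpredDl; last first.
      by apply: memv_suml => j _; apply: memvZ.
    move=> h; apply/eqP/negPn/negP => nz; move/negP: vk; apply; by rewrite -(scale_mem _ _ nz).
  rewrite Bm_sum (split_sum w c (v' k)) d0 scale0r addr0.
  by apply: memv_suml => j _; apply: memvZ.
exact: hyp_ne_full.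
Qed.

End Core.

End M5.
Import M5.
Module M6.
Set Implicit Arguments. Unset Strict Implicit. Unset Printing Implicit Defensive.
Import GRing.Theory.
Local Open Scope ring_scope.
Local Open Scope fset_scope.

Section Aux.
Variables (K : fieldType) (l : nat).
Local Notation V := 'rV[K]_l.
Local Notation sub := {vspace V}.

Lemma dimcap (I : Type) (r : seq I) (P : pred I) (F : I -> sub) :
  (forall i, P i -> is_hyperplane (F i)) ->
  (l <= \dim (\bigcap_(i <- r | P i) F i)%VS + count P r)%N.
Proof.
move=> h; elim: r => [|a r IH]; first by rewrite big_nil dimV addn0.
rewrite big_cons /=; case Pa: (P a) => //=.
have e := dimv_sum_cap (F a) (\bigcap_(i <- r | P i) F i)%VS.
have d1 := dimv_le (F a + \bigcap_(i <- r | P i) F i)%VS.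
have ha := h a Pa; rewrite /is_hyperplane in ha.
lia.
Qed.

Lemma dim_cap_lt (W H : sub) : ~~ (W <= H)%VS -> (\dim (W :&: H) < \dim W)%N.
Proof.
move=> nWH; have [le eq] := dimv_leqif_sup (capvSl W H).
by rewrite ltn_neqAle le andbT eq subv_cap subvv.
Qed.

Lemma nondrop (s : seq sub) : size s = l.+1 ->
  exists2 k, (k < l.+1)%N & (\bigcap_(H <- take k s) H <= nth 0%VS s k)%VS.
Proof.
move=> ss; apply: NNPP => hn.
have h : forall k, (k <= l.+1)%N -> (\dim (\bigcap_(H <- take k s) H)%VS + k <= l)%N.
  elim => [|k IH] hk; first by rewrite take0 big_nil dimV addn0.
  rewrite (take_nth 0%VS) ?ss // -cats1 big_cat /= big_cons big_nil capvf.
  have nd : ~~ (\bigcap_(H <- take k s) H <= nth 0%VS s k)%VS.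
    by apply/negP => hh; apply: hn; exists k.
  have := dim_cap_lt nd; have := IH (ltnW hk); lia.
by have := h l.+1 (leqnn _); lia.
Qed.

Lemma sub_sum_seq (r : seq sub) X : X \in r -> (X <= \sum_(Y <- r) Y)%VS.
Proof.
elim: r => [//|a r IH]; rewrite in_cons big_cons => /orP[/eqP->|/IH h].
  exact: addvSl.
exact: subv_trans h (addvSr _ _).
Qed.

Lemma sum_seq_sub (I : eqType) (r : seq I) (F : I -> sub) W :
  (forall X, X \in r -> (F X <= W)%VS) -> (\sum_(Y <- r) F Y <= W)%VS.
Proof.
elim: r => [|a r IH] h; first by rewrite big_nil sub0v.
rewrite big_cons subv_add h ?mem_head //= IH // => X hX; apply: h.
by rewrite in_cons hX orbT.
Qed.

Lemma limg_cap_inj (phi : 'End(V)) (U W : sub) : lker phi = 0%VS ->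
  (phi @: (U :&: W))%VS = (phi @: U :&: phi @: W)%VS.
Proof.
move=> ker; apply/eqP; rewrite eqEsubv limg_cap /=.
apply/subvP => z; rewrite memv_cap => /andP[/memv_imgP [u uU ->] /memv_imgP [w wW e]].
have uw : u = w.
  apply/eqP; rewrite -subr_eq0 -memv0 -ker memv_ker linearB /= e subrr //.
by apply: memv_img; rewrite memv_cap uU uw wW.
Qed.

Lemma limg_full_inj (phi : 'End(V)) : lker phi = 0%VS -> (phi @: fullv)%VS = fullv.
Proof.
move=> ker; apply: subv_full_eq; rewrite limg_dim_eq ?dimV ?ker ?capv0 //.
Qed.

Lemma limg_bigcap_inj (phi : 'End(V)) (I : Type) (r : seq I) (P : pred I) (F : I -> sub) :
  lker phi = 0%VS ->
  (phi @: (\bigcap_(i <- r | P i) F i))%VS = (\bigcap_(i <- r | P i) phi @: F i)%VS.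
Proof.
move=> ker; elim: r => [|a r IH]; first by rewrite !big_nil limg_full_inj.
by rewrite !big_cons; case: (P a) => //; rewrite limg_cap_inj // IH.
Qed.

Lemma line_sub (F : 'I_l -> sub) (v : 'I_l -> V)
  (vin : forall i j, j != i -> v i \in F j) (vout : forall i, v i \notin F i) i (U : sub) :
  (v i \in U) = (\bigcap_(j <- enum 'I_l | j != i) F j <= U)%VS.
Proof.
apply/idP/idP => [vU|h]; last first.
  apply: (subvP h); apply/memv_bigcapP => j _ ji; exact: vin.
apply/subvP => y /memv_bigcapP yin.
rewrite (Bm_decomp vin vout y) Bm_sum; apply: memv_suml => j _.
have [->|ji] := eqVneq j i; first exact: memvZ.
rewrite (Bm_coef0 vin vout (k:=j)) ?scale0r ?mem0v //.
by rewrite -(Bm_decomp vin vout); apply: yin; rewrite ?mem_enum.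
Qed.

End Aux.

End M6.
Import M6.
Import GRing.Theory.
Local Open Scope fset_scope.

Theorem mainTheorem3 (K : fieldType) (l : nat) (A : {fset {vspace 'rV[K]_l}}) :
  arrangement A -> essential A -> irreducible A ->
  (exists S : {fset {vspace 'rV[K]_l}},
     [/\ S `<=` A, #|` S| = l.+1 & forall H, H \in A <-> generated A S H]) ->
  proj_unique A.
Proof.
move=> arrA essA _ [S [SA cardS genS]] C arrC [g [gL gS gI]].
have Wsub : forall i H, Gen A S i H -> ((\bigcap_(H' <- S) H')%VS <= H)%VS.
  elim => [|i IH] H /=.
    by move=> HS; apply/subvP => x /memv_bigcapF; apply.
  move=> [HA [J [hJ eH]]]; rewrite eH.
  have [J0|[X XJ]] := fset_0Vmem J.
    have hH := arrA _ HA; move: hH; rewrite eH J0 big_nil /is_hyperplane dimv0 => l1.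
    have [s sS] : exists s, s \in S.
      apply: NNPP => hn; move: cardS; have -> : S = fset0.
        by apply/fsetP => x; rewrite in_fset0; apply/negP => xS; apply: hn; exists x.
      by rewrite cardfs0.
    have hs := arrA _ (fsubsetP SA _ sS); rewrite /is_hyperplane in hs.
    have hs0 : \dim s = 0%N by move: hs; rewrite -[X in _ = X]l1; case.
    have s0 : s = 0%VS by apply/eqP; rewrite -dimv_eq0 hs0.
    by apply/subvP => x /memv_bigcapF xS; rewrite -s0; apply: xS.
  apply: subv_trans (sub_sum_seq XJ).
  have [B [hB ->]] := hJ X XJ.
  by apply/subvP => x xW; apply/memv_bigcapF => H' H'B; apply: (subvP (IH _ (hB _ H'B))).
have S0 : forall x, (forall H, H \in S -> x \in H) -> x = 0%R.
  move=> x hx; apply/eqP; rewrite -memv0 -essA; apply/memv_bigcapF => H HA.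
  have [i Gi] := (genS H).1 HA.
  by apply: (subvP (Wsub _ _ Gi)); apply/memv_bigcapF.
set s := enum_fset S.
have ss : size s = l.+1 by [].
have [k kl Wk] := nondrop ss.
set H0 := nth 0%VS s k.
set r := take k s ++ drop k.+1 s.
have sr : size r = l by rewrite /r size_cat size_take size_drop ss kl; lia.
pose Hs (i : 'I_l) := nth 0%VS r i.
have sdec : s = take k s ++ H0 :: drop k.+1 s.
  by rewrite /H0 -drop_nth ?ss // cat_take_drop.
have Hs_in r0 : r0 \in r -> r0 \in S.
  by rewrite /r mem_cat => /orP[/mem_take|/mem_drop].
have HsS i : Hs i \in S by apply: Hs_in; rewrite mem_nth ?sr.
have H0S : H0 \in S by rewrite /H0 mem_nth ?ss.
have cover : forall H, H \in S -> H = H0 \/ exists i, H = Hs i.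
  move=> H; rewrite -[H \in S]/(H \in s) sdec mem_cat in_cons.
  case/or3P => [ht|/eqP->|hd]; [right| by left| right].
    have hr : H \in r by rewrite /r mem_cat ht.
    have hi : (index H r < l)%N by rewrite -[X in (_ < X)%N]sr index_mem.
    by exists (Ordinal hi); rewrite /Hs /= nth_index.
  have hr : H \in r by rewrite /r mem_cat hd orbT.
  have hi : (index H r < l)%N by rewrite -[X in (_ < X)%N]sr index_mem.
    by exists (Ordinal hi); rewrite /Hs /= nth_index.
have Hs0 : forall x, (forall i, x \in Hs i) -> x = 0%R.
  move=> x hx; have hr : forall r0, r0 \in r -> x \in r0.
    move=> r0 r0r; have hi : (index r0 r < l)%N by rewrite -[X in (_ < X)%N]sr index_mem.
    by have := hx (Ordinal hi); rewrite /Hs /= nth_index.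
  apply: S0 => H; rewrite -[H \in S]/(H \in s) sdec mem_cat in_cons.
  have xH0 : x \in H0.
    apply: (subvP Wk); apply/memv_bigcapP => H' H'k _; apply: hr.
    by rewrite /r mem_cat H'k.
  case/or3P => [ht|/eqP->//|hd]; apply: hr; by rewrite /r mem_cat ?ht ?hd ?orbT.
have hypS H : H \in S -> is_hyperplane H by move=> HS; apply: arrA; apply: (fsubsetP SA).
have LatS H : H \in S -> Lat A H by move=> HS; apply: LatA_base; apply: (fsubsetP SA).
pose L i := (\bigcap_(j <- enum 'I_l | j != i) Hs j)%VS.
have LL i : Lat A (L i) by apply: Lset_bigcap => j _; apply: LatS.
have notsub i : ~~ (L i <= Hs i)%VS.
  apply/negP => hsub.
  have d := @dimcap K l _ (enum 'I_l) (fun j => j != i) Hs (fun j _ => hypS _ (HsS j)).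
  have cnt : (count (fun j => j != i) (enum 'I_l) < l)%N.
    have cp := count_predC (fun j => j != i) (enum 'I_l); rewrite size_enum_ord in cp.
    rewrite -[X in (_ < X)%N]cp -addn1 leq_add2l -has_count; apply/hasP; exists i; by rewrite ?mem_enum //= eqxx.
  have L0 : L i = 0%VS.
    apply/eqP; rewrite -subv0; apply/subvP => x xL; rewrite memv0; apply/eqP; apply: Hs0 => j.
    have [->|ji] := eqVneq j i; first exact: (subvP hsub).
    by move/memv_bigcapP: xL; apply; rewrite ?mem_enum.
  by move: d; rewrite -/(L i) L0 dimv0 add0n leqNgt cnt.
have vex i : exists x, (x \in L i) && (x \notin Hs i).
  apply: NNPP => hn; move/negP: (notsub i); apply; apply/subvP => x xL.
  by apply/negPn/negP => xn; apply: hn; exists x; rewrite xL xn.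
pose v i := xchoose (vex i).
have vP i : (v i \in L i) && (v i \notin Hs i) := xchooseP (vex i).
have vin i j : j != i -> v i \in Hs j.
  by move=> ji; have /andP[/memv_bigcapP h _] := vP i; apply: h; rewrite ?mem_enum.
have vout i : v i \notin Hs i by have /andP[_ ->] := vP i.
pose Hs' i := g (Hs i).
have gL_eq i : g (L i) = (\bigcap_(j <- enum 'I_l | j != i) Hs' j)%VS.
  by rewrite /L (g_bigcap gL gS gI) // => j _; apply: LatS.
have notsub' i : ~~ (g (L i) <= Hs' i)%VS.
  by apply/negP => /(gI _ _ (LL i) (LatS _ (HsS i))) h; move/negP: (notsub i).
have v'ex i : exists x, (x \in g (L i)) && (x \notin Hs' i).
  apply: NNPP => hn; move/negP: (notsub' i); apply; apply/subvP => x xL.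
  by apply/negPn/negP => xn; apply: hn; exists x; rewrite xL xn.
pose v' i := xchoose (v'ex i).
have v'P i : (v' i \in g (L i)) && (v' i \notin Hs' i) := xchooseP (v'ex i).
have v'in i j : j != i -> v' i \in Hs' j.
  move=> ji; have /andP[h _] := v'P i; move: h; rewrite gL_eq => /memv_bigcapP h.
  by apply: h; rewrite ?mem_enum.
have v'out i : v' i \notin Hs' i by have /andP[_ ->] := v'P i.
have vH0 i : (v i \in H0) = (v' i \in g H0).
  rewrite (line_sub vin vout) (line_sub v'in v'out) -gL_eq -/(L i).
  by apply/idP/idP => /(gI _ _ (LL i) (LatS _ H0S)).
have hHs' i : is_hyperplane (Hs' i) by apply: (arrC); apply: (gA_C arrA arrC gL gS gI) => //; apply: (fsubsetP SA).
have hH0' : is_hyperplane (g H0) by apply: (arrC); apply: (gA_C arrA arrC gL gS gI) => //; apply: (fsubsetP SA).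
have [phi [ker [phiHs phiH0]]] :=
  core (fun i => hypS _ (HsS i)) hHs' (hypS _ H0S) hH0' vin vout v'in v'out vH0.
have phiS : forall H, H \in S -> (phi @: H)%VS = g H.
  by move=> H /cover [->|[i ->]].
have phiGen : forall i H, Gen A S i H -> H \in A /\ (phi @: H)%VS = g H.
  elim => [|i IH] H /=.
    by move=> HS; split; [apply: (fsubsetP SA) | apply: phiS].
  move=> [HA [J [hJ eH]]]; split => //.
  have hX : forall X, X \in J -> Lat A X /\ (phi @: X)%VS = g X.
    move=> X XJ; have [B [hB ->]] := hJ X XJ.
    have BA : forall H', H' \in B -> Lat A H' by move=> H' /hB /IH [/LatA_base].
    rewrite big_seq; split; first by apply: Lset_bigcap => H' hH'; apply: BA.
    rewrite limg_bigcap_inj // (g_bigcap gL gS gI); last by move=> H' hH'; apply: BA.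
    by apply: eq_bigr => H' /hB /IH [].
  have LH := LatA_base HA.
  apply: (hyp_sub_eq); first by rewrite /is_hyperplane limg_dim_eq ?ker ?capv0 //; apply: arrA.
    rewrite {1}eH limg_sum; apply: sum_seq_sub => X XJ.
    have [LX ->] := hX X XJ; apply/(gI _ _ LX LH); rewrite eH; exact: sub_sum_seq.
  by apply: hyp_ne_full; apply: (arrC); apply: (gA_C arrA arrC gL gS gI).
have phiA H : H \in A -> (phi @: H)%VS = g H.
  by move=> HA; have [i Gi] := (genS H).1 HA; have [] := phiGen _ _ Gi.
exists phi; split => //.
apply/fsetP => H'; apply/idP/imfsetP => [H'C|[H HA ->]].
  have [H HA eH] := C_gA arrA arrC gS gI H'C.
  by exists H => //; rewrite phiA.
by rewrite phiA //; apply: (gA_C arrA arrC gL gS gI).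
Qed.
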